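(* Let $A$ be a finite set. The map $F:R^+(A)\to R(A)$, $F(\overset{x}{<},\overset{y}{<})=(\overset{x}{<},\overset{y}{<}\setminus\overset{x}{<})$, is an order-preserving map $(R^+(A),\subseteq)\to(R(A),\sqsubseteq)$; the map $G$ from the barycentric subdivision $\mathrm{sd}(R(A),\sqsubseteq)$ to $(R^+(A),\subseteq)$ sending a chain $\overset{*}{<}_0\sqsubsetneq\overset{*}{<}_1\sqsubsetneq\dots\sqsubsetneq\overset{*}{<}_r$ to $(\overset{x}{<}_r,\overset{y}{<}_0)$ is order-preserving; and the maps $|F|:|(R^+(A),\subseteq)|\to|(R(A),\sqsubseteq)|$ and the composite \[ |(R(A),\sqsubseteq)|\cong|\mathrm{sd}(R(A),\sqsubseteq)|\xrightarrow{|G|}|(R^+(A),\subseteq)| \] (the first map being the standard homeomorphism of a poset's realization with that of its barycentric subdivision) are mutually inverse $\Sigma_A$-equivariant homotopy equivalences.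
   Context: A strict partial order is a transitive irreflexive relation; it is semi-linear if it is induced by a surjection $h:A\to\{1,\dots,l\}$ (i.e. $a<b$ iff $h(a)<h(b)$). For strict partial orders $<_1,<_2$, $<_1\bar\cup<_2$ denotes the transitive closure of their union, and $a(<_1\setminus<_2)b$ means $a<_1b$ and neither $a<_2b$ nor $b<_2a$. A double order on $A$ is a pair $\overset{*}{<}=(\overset{x}{<},\overset{y}{<})$ of strict partial orders on $A$ such that for all $a\ne b$ at least one of $a\overset{x}{<}b$, $b\overset{x}{<}a$, $a\overset{y}{<}b$, $b\overset{y}{<}a$ holds. It is regular if $\overset{x}{<}$ is semi-linear and $a\overset{x}{<}b$ implies neither $a\overset{y}{<}b$ nor $b\overset{y}{<}a$. A double order is semi-regular if it equals the componentwise union $\bar\cup$ of finitely many regular double orders. $R(A)$, $R^+(A)$ are the sets of regular, resp. semi-regular double orders. Partial orders on double orders: $\overset{*}{<}_1\subseteq\overset{*}{<}_2$ iff $\overset{x}{<}_1\subseteq\overset{x}{<}_2$ and $\overset{y}{<}_1\subseteq\overset{y}{<}_2$; $\overset{*}{<}_1\sqsubseteq\overset{*}{<}_2$ iff $\overset{x}{<}_1\subseteq\overset{x}{<}_2$ and $\overset{y}{<}_1\supseteq\overset{y}{<}_2$. The barycentric subdivision $\mathrm{sd}(P)$ of a poset $P$ is the poset of finite nonempty chains in $P$ ordered by inclusion; $|P|$ is the realization of the nerve. $\Sigma_A$ acts on double orders by $(\overset{x}{<},\overset{y}{<})\sigma=(\overset{x}{<}\sigma,\overset{y}{<}\sigma)$,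 $a(\overset{x}{<}\sigma)b$ iff $\sigma(a)\overset{x}{<}\sigma(b)$ (similarly for $y$). *)

(* Defs.v *)
From HB Require Import structures.
From mathcomp Require Import all_boot all_order all_algebra all_fingroup.
From mathcomp Require Import all_classical all_reals all_analysis.
Set Implicit Arguments. Unset Strict Implicit. Unset Printing Implicit Defensive.
Import Order.TTheory GRing.Theory Num.Theory.

(* (a, b) \in r  means  a r b.                                            *)
Section DoubleOrders.
Variable A : finType.
Local Notation relA := {set A * A}.

Definition irreflexiveR (r : relA) := forall a, (a, a) \notin r.
Definition transitiveR (r : relA) :=
  forall a b c, (a, b) \in r -> (b, c) \in r -> (a, c) \in r.
Definition strict_po (r : relA) := irreflexiveR r /\ transitiveR r.

Definition semi_linear (r : relA) :=
  exists (l : nat) (h : A -> nat),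
    (forall a, 1 <= h a <= l)%N /\
    (forall k, (1 <= k <= l)%N -> exists a, h a = k) /\
    (forall a b, ((a, b) \in r) = (h a < h b)%N).

Definition tclos (r : relA) : relA :=
  [set p | [exists c, ((p.1, c) \in r) &&
                       connect (fun u v => (u, v) \in r) c p.2]].

Definition tunion (r1 r2 : relA) : relA := tclos (r1 :|: r2).

Definition rdiff (r1 r2 : relA) : relA :=
  [set p in r1 | ((p.1, p.2) \notin r2) && ((p.2, p.1) \notin r2)].

Definition dorder := (relA * relA)%type.

Definition is_double_order (o : dorder) :=
  strict_po o.1 /\ strict_po o.2 /\
  forall a b, a != b ->
    [|| (a, b) \in o.1, (b, a) \in o.1, (a, b) \in o.2 | (b, a) \in o.2].

Definition regular (o : dorder) :=
  is_double_order o /\ semi_linear o.1 /\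
  forall a b, (a, b) \in o.1 -> ((a, b) \notin o.2) && ((b, a) \notin o.2).

Definition big_tunion (s : seq dorder) : dorder :=
  (tclos (\bigcup_(o <- s) o.1), tclos (\bigcup_(o <- s) o.2)).

Definition semi_regular (o : dorder) :=
  is_double_order o /\
  exists s : seq dorder, (forall o', o' \in s -> regular o') /\ o = big_tunion s.

Definition dsub (o1 o2 : dorder) : bool := (o1.1 \subset o2.1) && (o1.2 \subset o2.2).
Definition dsq (o1 o2 : dorder) : bool := (o1.1 \subset o2.1) && (o2.2 \subset o1.2).

Definition Fmap (o : dorder) : dorder := (o.1, rdiff o.2 o.1).

Definition is_chain (T : finType) (le : rel T) (c : {set T}) : bool :=
  [forall u in c, forall v in c, le u v || le v u].

Definition sd_vertex (T : finType) (S : pred T) (le : rel T) (c : {set T}) :=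
  [&& (0 < #|c|)%N, c \subset S & is_chain le c].

Definition chain_top (c : {set dorder}) : dorder :=
  odflt (finset.set0, finset.set0) [pick m in c | [forall m' in c, dsq m' m]].
Definition chain_bot (c : {set dorder}) : dorder :=
  odflt (finset.set0, finset.set0) [pick m in c | [forall m' in c, dsq m m']].

Definition Gmap (c : {set dorder}) : dorder := ((chain_top c).1, (chain_bot c).2).

Definition ract (s : {perm A}) (r : relA) : relA := [set p | (s p.1, s p.2) \in r].
Definition dact (s : {perm A}) (o : dorder) : dorder := (ract s o.1, ract s o.2).
Definition chain_act (s : {perm A}) (c : {set dorder}) : {set dorder} := dact s @: c.

End DoubleOrders.

(* Geometric realization of a finite poset (S, le), S a subset of a      *)
(* finite type T: the points are the functions t : T -> R (barycentric    *)
(* coordinates) with t >= 0, support contained in S and a chain, and      *)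
(* total weight 1; it carries the subspace topology of the product        *)
(* topology on T -> R.                                                    *)
Import numFieldNormedType.Exports.
Local Open Scope ring_scope.
Local Open Scope classical_set_scope.

Notation rpoint R T := {ptws T -> R}.

Definition realization (R : realType) (T : finType) (S : pred T) (le : rel T)
  : set (rpoint R T) :=
  [set t | [/\ forall v, 0 <= t v,
               forall v, ~~ S v -> t v = 0,
               \sum_v t v = 1
             & forall v w, 0 < t v -> 0 < t w -> le v w || le w v]].

Definition realize (R : realType) (T T' : finType) (f : T -> T')
  (t : rpoint R T) : rpoint R T' :=
  fun w => \sum_(v | f v == w) t v.

(* the standard homeomorphism |P| -> |sd P|: a point t of |P| goes to the point
   of |sd P| giving to the chain c the weight
   #|c| * max(0, min_{v in c} t v - max_{v notin c} t v)
   (i.e. t = sum_j (v_j - v_{j+1}) 1_{c_j} over its superlevel sets c_j,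
   and 1_c = #|c| * barycenter(c)). *)
Definition minover (R : realType) (T : finType) (c : {set T}) (t : T -> R) : R :=
  \big[Order.min/1]_(v in c) t v.
Definition maxoutside (R : realType) (T : finType) (c : {set T}) (t : T -> R) : R :=
  \big[Order.max/0]_(v in ~: c) t v.

Definition sd_homeo (R : realType) (T : finType) (S : pred T) (le : rel T)
  (t : rpoint R T) : rpoint R {set T} :=
  fun c => if sd_vertex S le c then
             #|c|%:R * Order.max 0 (minover c t - maxoutside c t)
           else 0.

Definition pt_act (R : realType) (T : finType) (g : T -> T) (t : rpoint R T)
  : rpoint R T := fun v => t (g v).

Definition cont_on (R : realType) (T T' : finType) (X : set (rpoint R T))
  (f : rpoint R T -> rpoint R T') := {within X, continuous f}.

Definition homotopic (R : realType) (T T' : finType) (X : set (rpoint R T))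
  (Y : set (rpoint R T')) (f g : rpoint R T -> rpoint R T') :=
  exists H : R * rpoint R T -> rpoint R T',
    [/\ {within `[0, 1] `*` X, continuous H},
        forall s t, 0 <= s <= 1 -> X t -> Y (H (s, t)),
        forall t, X t -> H (0, t) = f t
      & forall t, X t -> H (1, t) = g t].

Definition equiv_homotopic (R : realType) (T : finType) (Gp : Type)
  (act : Gp -> T -> T) (X : set (rpoint R T)) (f g : rpoint R T -> rpoint R T) :=
  exists H : R * rpoint R T -> rpoint R T,
    [/\ {within `[0, 1] `*` X, continuous H},
        forall s t, 0 <= s <= 1 -> X t -> X (H (s, t)),
        forall t, X t -> H (0, t) = f t,
        forall t, X t -> H (1, t) = g t
      & forall sg s t, 0 <= s <= 1 -> X t ->
          H (s, pt_act (act sg) t) = pt_act (act sg) (H (s, t))].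

(* Main.v *)
Require Import Defs.
From HB Require Import structures.
From mathcomp Require Import all_boot all_order all_algebra all_fingroup.
From mathcomp Require Import all_classical all_reals all_analysis.
From mathcomp Require Import zify ring lra.
Import Order.TTheory GRing.Theory Num.Theory.
Import numFieldNormedType.Exports.
Local Open Scope ring_scope.
Local Open Scope classical_set_scope.
Set Implicit Arguments. Unset Strict Implicit. Unset Printing Implicit Defensive.

Section Comb.
Variable A : finType.
Local Notation relA := {set A * A}.
Local Notation P := (dorder A).

Lemma tclosE (r : relA) a b :
  ((a, b) \in tclos r) = [exists c, ((a, c) \in r) && connect (fun u v => (u, v) \in r) c b].
Proof. by rewrite inE. Qed.

Lemma tclos_sub (r : relA) : r \subset tclos r.
Proof.
apply/fintype.subsetP => -[a b] ab; rewrite tclosE; apply/existsP; exists b.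
by rewrite ab connect0.
Qed.

Lemma connect_trans_rel (r : relA) c b : transitiveR r ->
  connect (fun u v => (u, v) \in r) c b -> c = b \/ (c, b) \in r.
Proof.
move=> tr /connectP [p]; elim: p c => [|d p IH] c /=; first by move=> _ ->; left.
move=> /andP[cd pth] lst; case: (IH d pth lst) => [<-|db]; right => //.
exact: tr cd db.
Qed.

Lemma tclos_id (r : relA) : transitiveR r -> tclos r = r.
Proof.
move=> tr; apply/eqP; rewrite finset.eqEsubset tclos_sub andbT.
apply/fintype.subsetP => -[a b]; rewrite tclosE; move=> /existsP [c /andP[ac]].
by move/(connect_trans_rel tr) => [<-|cb] //; exact: tr ac cb.
Qed.

Definition NT (r : relA) := forall a b c, (a, c) \in r -> ((a, b) \in r) || ((b, c) \in r).

Lemma NT_tclos (r : relA) : NT r -> NT (tclos r).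
Proof.
move=> nt a b c; rewrite tclosE; move=> /existsP [d /andP[ad dc]].
case/orP: (nt a b d ad) => [ab|bd].
  by rewrite (fintype.subsetP (tclos_sub r) _ ab).
apply/orP; right; rewrite tclosE; by apply/existsP; exists d; rewrite bd.
Qed.

Lemma NT_bigcup (s : seq P) : (forall o, o \in s -> NT o.1) ->
  NT (\bigcup_(o <- s) o.1).
Proof.
move=> H a b c; rewrite finset.bigcup_seq; move=> /finset.bigcupP [ob oin ac].
have /orP[ab|bc] := H ob oin a b c ac.
  by apply/orP; left; apply/finset.bigcupP; exists ob.
by apply/orP; right; apply/finset.bigcupP; exists ob.
Qed.

Lemma semilinear_NT (r : relA) : semi_linear r -> NT r.
Proof.
move=> [l [h [_ [_ Hr]]]] a b c; rewrite !Hr; move=> ac.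
by case: (ltnP (h a) (h b)) => //= hba; apply: leq_ltn_trans hba ac.
Qed.

Definition predR (r : relA) (a : A) : {set A} := [set b | (b, a) \in r].

Lemma predR_proper (r : relA) a b : strict_po r -> (a, b) \in r ->
  predR r a \proper predR r b.
Proof.
move=> [irr tr] ab; apply/properP; split.
  apply/fintype.subsetP => c; rewrite !inE; move=> ca; exact: tr ca ab.
exists a; rewrite !inE //; exact: irr.
Qed.

Lemma predR_sub (r : relA) a b : NT r -> (a, b) \notin r ->
  predR r b \subset predR r a.
Proof.
move=> nt nab; apply/fintype.subsetP => c; rewrite !inE; move=> cb.
by case/orP: (nt c a b cb) => // ab; rewrite ab in nab.
Qed.

Lemma semilinear_of (r : relA) : strict_po r -> NT r -> semi_linear r.
Proof.
move=> spo nt.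
pose PS : {set {set A}} := [set predR r b | b : A].
pose hp (p : {set A}) := #|[set q in PS | q \subset p]|.
have hp_mono (p q : {set A}) : p \proper q -> q \in PS -> (hp p < hp q)%N.
  move=> pq qPS; apply: proper_card; apply/properP; split.
    apply/fintype.subsetP => x; rewrite !inE; move=> /andP[-> xp] /=.
    exact: fintype.subset_trans xp (proper_sub pq).
  exists q; first by rewrite inE qPS subxx.
  by rewrite inE qPS /=; apply/negP => qp; move/properP: pq => [_ [y yq /negP []]]; exact: (fintype.subsetP qp).
have hp_le (p q : {set A}) : p \subset q -> (hp p <= hp q)%N.
  move=> pq; apply: subset_leq_card; apply/fintype.subsetP => x; rewrite !inE; move=> /andP[-> xp].
  exact: fintype.subset_trans xp pq.
have Hr a b : ((a, b) \in r) = (hp (predR r a) < hp (predR r b))%N.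
  apply/idP/idP => [ab|]; first by apply: hp_mono; [exact: predR_proper | apply: imset_f].
  apply: contraTT => nab; rewrite -leqNgt; apply: hp_le; exact: predR_sub.
exists #|PS|, (fun a => hp (predR r a)); split; [|split].
- move=> a; apply/andP; split.
    apply/card_gt0P; exists (predR r a); rewrite inE imset_f //= subxx //.
  apply: subset_leq_card; apply/fintype.subsetP => x; rewrite inE; move=> /andP[]//.
- move=> k kb.
  pose S := [seq hp p | p <- enum PS].
  have inj : {in enum PS &, injective hp}.
    move=> p q; rewrite !mem_enum; move=> /imsetP [a _ ->] /imsetP [b _ ->] E.
    case abr: ((a, b) \in r); first by rewrite Hr E ltnn in abr.
    case bar: ((b, a) \in r); first by rewrite Hr -E ltnn in bar.
    apply/eqP; rewrite finset.eqEsubset !predR_sub ?abr ?bar //.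
  have uS : uniq S by rewrite map_inj_in_uniq // enum_uniq.
  have sub : {subset S <= iota 1 #|PS|}.
    move=> x /mapP [p pin ->]; rewrite mem_iota; rewrite mem_enum in pin.
    apply/andP; split.
      apply/card_gt0P; exists p; rewrite inE pin subxx //.
    rewrite add1n ltnS; apply: subset_leq_card; apply/fintype.subsetP => y; rewrite inE; move=> /andP[]//.
  have le : (size (iota 1 #|PS|) <= size S)%N by rewrite size_iota size_map -cardE.
  have [_ eqS] := uniq_min_size uS sub le.
  have : k \in S by rewrite eqS mem_iota add1n ltnS.
  move=> /mapP [p]; rewrite mem_enum; move=> /imsetP [a _ ->] ->; by exists a.
- exact: Hr.
Qed.


Lemma rdiffE (r1 r2 : relA) a b :
  ((a, b) \in rdiff r1 r2) = [&& (a, b) \in r1, (a, b) \notin r2 & (b, a) \notin r2].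
Proof. by rewrite inE. Qed.

Lemma regular_semi (o : P) : regular o -> semi_regular o.
Proof.
move=> ro; have [dbl _] := ro; split => //.
exists [:: o]; split; first by move=> o'; rewrite inE => /eqP ->.
case: dbl => [[_ t1] [[_ t2] _]].
by rewrite /big_tunion !big_seq1 !tclos_id //; case: o {ro} t1 t2.
Qed.

Lemma F_regular (o : P) : is_double_order o -> NT o.1 -> regular (Fmap o).
Proof.
case: o => X Y [[irrX trX] [[irrY trY] tot]] nt; rewrite /Fmap /=.
split; [split; [by split | split] | split].
- split.
    by move=> a; rewrite rdiffE (negbTE (irrY a)).
  move=> a b c; rewrite !rdiffE; move=> /and3P[ab nab nba] /and3P[bc nbc ncb].
  rewrite (trY _ _ _ ab bc) /=; apply/andP; split; apply/negP => H.
    by case/orP: (nt a b c H) => H'; [rewrite H' in nab | rewrite H' in nbc].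
  by case/orP: (nt c b a H) => H'; [rewrite H' in ncb | rewrite H' in nba].
- move=> a b neq; move: (tot a b neq); rewrite !rdiffE /=.
  by case: ((a, b) \in X); case: ((b, a) \in X) => //=; rewrite ?andbT.
- exact: semilinear_of.
- by move=> a b ab; rewrite !rdiffE ab /= !andbF.
Qed.

Lemma item1 (o : P) : semi_regular o -> regular (Fmap o).
Proof.
move=> [dbl [s [sreg oE]]]; apply: F_regular dbl _; rewrite oE /=.
apply: NT_tclos; apply: NT_bigcup => o' /sreg [_ [sl _]]; exact: semilinear_NT.
Qed.

Lemma item2 (o1 o2 : P) : is_double_order o1 -> is_double_order o2 -> dsub o1 o2 ->
  dsq (Fmap o1) (Fmap o2).
Proof.
rewrite /dsub /dsq /Fmap /=; move=> d1 [_ [[irr2 tr2] _]] /andP[s1 s2]; rewrite s1 /=.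
apply/fintype.subsetP => -[a b]; rewrite !rdiffE; move=> /and3P[ab na nb].
have na1 : (a, b) \notin o1.1 by apply: contra na; apply: (fintype.subsetP s1).
have nb1 : (b, a) \notin o1.1 by apply: contra nb; apply: (fintype.subsetP s1).
rewrite na1 nb1 !andbT.
have neq : a != b by apply/eqP => eab; rewrite eab in ab; move: (irr2 b); rewrite ab.
case: d1 => _ [_ tot1]; move: (tot1 a b neq); rewrite (negbTE na1) (negbTE nb1) /=.
case/orP => [//|ba]; have ba2 := fintype.subsetP s2 _ ba.
by move: (irr2 a); rewrite (tr2 _ _ _ ab ba2).
Qed.

Lemma dsq_refl (o : P) : dsq o o.
Proof. by rewrite /dsq !subxx. Qed.

Lemma dsq_trans (a b c : P) : dsq a b -> dsq b c -> dsq a c.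
Proof.
rewrite /dsq; move=> /andP[h1 h2] /andP[h3 h4].
by rewrite (fintype.subset_trans h1 h3) (fintype.subset_trans h4 h2).
Qed.

Lemma dsq_anti (a b : P) : dsq a b -> dsq b a -> a = b.
Proof.
case: a b => [a1 a2] [b1 b2]; rewrite /dsq /=; move=> /andP[h1 h2] /andP[h3 h4].
by congr pair; apply/eqP; rewrite finset.eqEsubset ?h1 ?h2 ?h3 ?h4.
Qed.

Lemma dsub_refl (o : P) : dsub o o.
Proof. by rewrite /dsub !subxx. Qed.

Lemma dsub_trans (a b c : P) : dsub a b -> dsub b c -> dsub a c.
Proof.
rewrite /dsub; move=> /andP[h1 h2] /andP[h3 h4].
by rewrite (fintype.subset_trans h1 h3) (fintype.subset_trans h2 h4).
Qed.

Definition mu (o : P) := (#|o.1| + (#|{: A * A}| - #|o.2|))%N.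

Lemma dsq_mu_eq (a b : P) : dsq a b -> (mu b <= mu a)%N -> a = b.
Proof.
case: a b => [a1 a2] [b1 b2]; rewrite /dsq /mu /=; move=> /andP[h1 h2] le.
have c1 := subset_leq_card h1; have c2 := subset_leq_card h2.
have c3 : (#|a2| <= #|{: A * A}|)%N by apply: max_card.
have [e1 e2] : (#|b1| <= #|a1|)%N /\ (#|a2| <= #|b2|)%N.
  move: le c1 c2 c3; move: #|b1| #|a1| #|b2| #|a2|; move: #|{: A * A}|.
  move=> *; split; lia.
by congr pair; apply/eqP; [rewrite finset.eqEcard h1 e1 | rewrite eq_sym finset.eqEcard h2 e2].
Qed.

Lemma top_exists S (c : {set P}) : sd_vertex S (@dsq A) c ->
  exists2 m, m \in c & forall m', m' \in c -> dsq m' m.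
Proof.
move=> /and3P [/card_gt0P [m0 m0c] _ /forall_inP ch].
case: (arg_maxnP mu m0c) => m mc mmax; exists m => // m' m'c.
move/forall_inP: (ch m' m'c) => /(_ m mc) /orP [//|mm'].
by rewrite (dsq_mu_eq mm' (mmax m' m'c)) dsq_refl.
Qed.

Lemma bot_exists S (c : {set P}) : sd_vertex S (@dsq A) c ->
  exists2 m, m \in c & forall m', m' \in c -> dsq m m'.
Proof.
move=> /and3P [/card_gt0P [m0 m0c] _ /forall_inP ch].
case: (arg_minnP mu m0c) => m mc mmin; exists m => // m' m'c.
move/forall_inP: (ch m' m'c) => /(_ m mc) /orP [m'm|//].
by rewrite -(dsq_mu_eq m'm (mmin m' m'c)) dsq_refl.
Qed.

Lemma top_uniq (c : {set P}) m : m \in c -> (forall m', m' \in c -> dsq m' m) ->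
  chain_top c = m.
Proof.
move=> mc mH; rewrite /chain_top; case: pickP => [m0 /andP[m0c /forall_inP H0] | H0] /=.
  exact: dsq_anti (mH m0 m0c) (H0 m mc).
by move: (H0 m); rewrite mc /=; move=> /negbT /negP []; apply/forall_inP.
Qed.

Lemma bot_uniq (c : {set P}) m : m \in c -> (forall m', m' \in c -> dsq m m') ->
  chain_bot c = m.
Proof.
move=> mc mH; rewrite /chain_bot; case: pickP => [m0 /andP[m0c /forall_inP H0] | H0] /=.
  exact: dsq_anti (H0 m mc) (mH m0 m0c).
by move: (H0 m); rewrite mc /=; move=> /negbT /negP []; apply/forall_inP.
Qed.

Lemma top_spec S (c : {set P}) : sd_vertex S (@dsq A) c ->
  chain_top c \in c /\ forall m', m' \in c -> dsq m' (chain_top c).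
Proof. by move=> cv; have [m mc mH] := top_exists cv; rewrite (top_uniq mc mH). Qed.

Lemma bot_spec S (c : {set P}) : sd_vertex S (@dsq A) c ->
  chain_bot c \in c /\ forall m', m' \in c -> dsq (chain_bot c) m'.
Proof. by move=> cv; have [m mc mH] := bot_exists cv; rewrite (bot_uniq mc mH). Qed.

Notation regP := (fun o : dorder A => `[< regular o >]) (only parsing).

Lemma sdv_reg (c : {set P}) m : sd_vertex regP (@dsq A) c -> m \in c -> regular m.
Proof. by move=> /and3P[_ sub _] mc; move: (fintype.subsetP sub m mc) => /asboolP. Qed.

Lemma item3 (c : {set P}) : sd_vertex regP (@dsq A) c -> semi_regular (Gmap c).
Proof.
move=> cv; have [tc tH] := top_spec cv; have [bc bH] := bot_spec cv.
have rt := sdv_reg cv tc; have rb := sdv_reg cv bc.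
have /andP[bt1 bt2] := bH _ tc.
rewrite /Gmap; set t := chain_top c; set b := chain_bot c.
case: rt => [[st [_ _]] _]; case: rb => [[_ [sb totb]] _].
split.
  split; [by [] | split; [by [] |]].
  move=> x y neq; move: (totb x y neq) => /or4P [h|h|->|->]; rewrite ?orbT //.
    by rewrite (fintype.subsetP bt1 _ h).
  by rewrite (fintype.subsetP bt1 _ h) orbT.
exists [:: t; b]; split.
  by move=> o'; rewrite !inE; move=> /orP[/eqP->|/eqP->]; [exact: sdv_reg cv tc | exact: sdv_reg cv bc].
rewrite /big_tunion !big_cons !big_nil !finset.setU0 (finset.setUidPl bt1) (finset.setUidPr bt2).
by case: st => _ ?; case: sb => _ ?; rewrite !tclos_id.
Qed.

Lemma item4 (c1 c2 : {set P}) : sd_vertex regP (@dsq A) c1 -> sd_vertex regP (@dsq A) c2 ->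
  c1 \subset c2 -> dsub (Gmap c1) (Gmap c2).
Proof.
move=> v1 v2 s12; have [tc1 _] := top_spec v1; have [bc1 _] := bot_spec v1.
have [_ tH2] := top_spec v2; have [_ bH2] := bot_spec v2.
have /andP[h1 _] := tH2 _ (fintype.subsetP s12 _ tc1).
have /andP[_ h2] := bH2 _ (fintype.subsetP s12 _ bc1).
by rewrite /dsub /Gmap /= h1 h2.
Qed.


Section Act.
Variable s : {perm A}.

Lemma ractE (r : relA) (a b : A) : ((a, b) \in Defs.ract s r) = ((s a, s b) \in r).
Proof. by rewrite inE. Qed.

Lemma ract_sub (r1 r2 : relA) : (Defs.ract s r1 \subset Defs.ract s r2) = (r1 \subset r2).
Proof.
apply/idP/idP => H; apply/fintype.subsetP => -[a b].
  move=> ab; have : (s^-1 a, s^-1 b)%g \in Defs.ract s r1 by rewrite ractE !permKV.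
  by move/(fintype.subsetP H); rewrite ractE !permKV.
by rewrite !ractE; apply: (fintype.subsetP H).
Qed.

Lemma dsq_act (a b : P) : dsq (dact s a) (dact s b) = dsq a b.
Proof. by rewrite /dsq /dact /= !ract_sub. Qed.

Lemma dsub_act (a b : P) : dsub (dact s a) (dact s b) = dsub a b.
Proof. by rewrite /dsub /dact /= !ract_sub. Qed.

Lemma Fmap_act (o : P) : Fmap (dact s o) = dact s (Fmap o).
Proof.
rewrite /Fmap /dact /=; congr pair; apply/setP => -[a b].
by rewrite rdiffE !ractE rdiffE.
Qed.

Lemma regular_act (o : P) : regular o -> regular (dact s o).
Proof.
case: o => X Y [[[irrX trX] [[irrY trY] tot]] [[l [h [hb [hs hr]]]] sep]].
rewrite /dact /=; split; [split; [split|split; [split|]]|split].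
- by move=> a; rewrite ractE.
- by move=> a b c; rewrite !ractE; apply: trX.
- by move=> a; rewrite ractE.
- by move=> a b c; rewrite !ractE; apply: trY.
- move=> a b neq; rewrite !ractE; apply: tot.
  by apply: contra neq => /eqP /perm_inj ->.
- exists l, (fun a => h (s a)); split; [by move=> a; apply: hb | split].
    move=> k kb; have [a ha] := hs k kb; exists (s^-1 a)%g; by rewrite permKV.
  by move=> a b; rewrite ractE hr.
- by move=> a b; rewrite !ractE; apply: sep.
Qed.

End Act.

Lemma dactK (s : {perm A}) : cancel (dact s) (dact s^-1).
Proof.
move=> [X Y]; rewrite /dact /=; congr pair; apply/setP => -[a b];
by rewrite !ractE !permKV.
Qed.

Lemma dactKV (s : {perm A}) : cancel (dact s^-1) (dact s).
Proof.
move=> [X Y]; rewrite /dact /=; congr pair; apply/setP => -[a b];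
by rewrite !ractE !permK.
Qed.

Lemma dact_inj (s : {perm A}) : injective (dact s).
Proof. exact: can_inj (dactK s). Qed.

Lemma regular_actE (s : {perm A}) (o : P) : regular (dact s o) <-> regular o.
Proof.
split; last exact: regular_act.
by move/(regular_act s^-1); rewrite dactK.
Qed.

Lemma sdv_act (s : {perm A}) (c : {set P}) :
  sd_vertex regP (@dsq A) (dact s @: c) = sd_vertex regP (@dsq A) c.
Proof.
rewrite /sd_vertex card_imset; last exact: dact_inj.
congr [&& _, _ & _].
  apply/idP/idP => H; apply/fintype.subsetP => m.
    move=> mc; have := fintype.subsetP H _ (imset_f (dact s) mc).
    by move=> /asboolP /regular_actE /asboolP.
  move=> /imsetP [m' m'c ->]; have := fintype.subsetP H _ m'c.
  by move=> /asboolP /(regular_act s) /asboolP.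
apply/idP/idP => /forall_inP H; apply/forall_inP => u.
  move=> uc; apply/forall_inP => v vc.
  move/forall_inP: (H _ (imset_f (dact s) uc)) => /(_ _ (imset_f (dact s) vc)).
  by rewrite !dsq_act.
move=> /imsetP [u' u'c ->]; apply/forall_inP => v /imsetP [v' v'c ->].
rewrite !dsq_act; move/forall_inP: (H _ u'c); apply.
exact: v'c.
Qed.

Lemma Gmap_act (s : {perm A}) (c : {set P}) : sd_vertex regP (@dsq A) c ->
  Gmap (dact s @: c) = dact s (Gmap c).
Proof.
move=> cv; have [tc tH] := top_spec cv; have [bc bH] := bot_spec cv.
rewrite /Gmap.
have -> : chain_top (dact s @: c) = dact s (chain_top c).
  apply: top_uniq; first exact: imset_f.
  by move=> m' /imsetP [m mc ->]; rewrite dsq_act; apply: tH.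
have -> : chain_bot (dact s @: c) = dact s (chain_bot c).
  apply: bot_uniq; first exact: imset_f.
  by move=> m' /imsetP [m mc ->]; rewrite dsq_act; apply: bH.
by [].
Qed.

End Comb.


Section Real.
Variable R : realType.

Section Gen.
Variable T : finType.

Definition goodp (S : pred T) (le : rel T) (v : T -> R) :=
  [/\ forall w, 0 <= v w, forall w, ~~ S w -> v w = 0
    & forall a b, 0 < v a -> 0 < v b -> le a b || le b a].

Lemma realizationP (S : pred T) (le : rel T) (t : rpoint R T) :
  realization S le t <-> goodp S le t /\ \sum_w t w = 1.
Proof. by split; [case => ? ? ? ?; split | case => -[] ? ? ? ?; split]. Qed.

Lemma sum_ge_term (v : T -> R) w : (forall u, 0 <= v u) -> v w <= \sum_u v u.
Proof. by move=> v0; rewrite (bigD1 w) //= lerDl sumr_ge0. Qed.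

Lemma pos_sum_exists (I : finType) (Q : pred I) (v : I -> R) :
  (forall i, 0 <= v i) -> 0 < \sum_(i | Q i) v i -> exists i, Q i /\ 0 < v i.
Proof.
move=> v0; case: (pickP (fun i => Q i && (0 < v i))) => [i /andP[qi vi] _|H].
  by exists i.
rewrite big1 ?ltxx // => i qi; move: (H i); rewrite qi /= => /negbT.
by rewrite lt_def negb_and negbK (v0 i) orbF => /eqP.
Qed.

Lemma sum_eq0_all (I : finType) (v : I -> R) :
  (forall i, 0 <= v i) -> \sum_i v i = 0 -> forall i, v i = 0.
Proof.
move=> v0 s0 i; apply/eqP; move/eqP: s0; rewrite psumr_eq0 // => /allP H.
by have := H i (mem_index_enum i).
Qed.

End Gen.

Section Realize.
Variables T T' : finType.

Lemma realize_ge0 (f : T -> T') (v : rpoint R T) :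
  (forall a, 0 <= v a) -> forall w, 0 <= realize f v w.
Proof. by move=> v0 w; apply: sumr_ge0. Qed.

Lemma realize_sum (f : T -> T') (v : rpoint R T) :
  \sum_w realize f v w = \sum_a v a.
Proof.
rewrite /realize (exchange_big_dep xpredT) //=; apply: eq_bigr => a _.
by rewrite (big_pred1 (f a)) // => w; rewrite /= eq_sym.
Qed.

Lemma realize_pos (f : T -> T') (v : rpoint R T) w :
  (forall a, 0 <= v a) -> 0 < realize f v w -> exists a, f a = w /\ 0 < v a.
Proof.
move=> v0 /(pos_sum_exists v0) [a [/eqP fa va]]; by exists a.
Qed.

Lemma realize_good (S : pred T) (le : rel T) (S' : pred T') (le' : rel T')
  (f : T -> T') (v : rpoint R T) :
  goodp S le v -> (forall a, S a -> S' (f a)) ->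
  (forall a b, S a -> S b -> le a b -> le' (f a) (f b)) ->
  goodp S' le' (realize f v).
Proof.
move=> [v0 vS vch] fS fle.
have suppS a : 0 < v a -> S a.
  by move=> va; apply/negPn/negP => /vS va0; rewrite va0 ltxx in va.
split.
- exact: realize_ge0.
- move=> w nS; apply/eqP; rewrite eq_le realize_ge0 // andbT leNgt.
  apply/negP => /(realize_pos v0) [a [faw va]].
  by have := fS a (suppS a va); rewrite faw (negbTE nS).
- move=> w1 w2 /(realize_pos v0) [a1 [<- va1]] /(realize_pos v0) [a2 [<- va2]].
  have s1 := suppS _ va1; have s2 := suppS _ va2.
  by case/orP: (vch a1 a2 va1 va2) => h; [rewrite fle | rewrite (fle a2 a1) ?orbT].
Qed.



End Realize.

Section SD.
Variable T : finType.
Implicit Types (v : T -> R) (c : {set T}).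

Lemma minover_le c v u : u \in c -> minover c v <= v u.
Proof. by move=> uc; rewrite /minover (bigD1 u) //= ge_min lexx. Qed.

Lemma minover_ex c v : (forall u, v u <= 1) -> (exists u, u \in c) ->
  exists2 u, u \in c & minover c v = v u.
Proof.
move=> v1 [u0 u0c].
have : minover c v = 1 \/ exists2 u, u \in c & minover c v = v u.
  rewrite /minover; apply: (big_ind (fun x => x = 1 \/ exists2 u, u \in c & x = v u)).
  - by left.
  - move=> x y hx hy; rewrite /Order.min; case: ifP => _; [exact: hx | exact: hy].
  - by move=> i ic; right; exists i.
case=> // h1; exists u0 => //; apply/eqP; rewrite eq_le minover_le //=.
by rewrite h1 v1.
Qed.

Lemma maxout_ge c v u : u \notin c -> v u <= maxoutside c v.
Proof.
by move=> uc; rewrite /maxoutside (bigD1 u) ?inE //= le_max lexx.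
Qed.

Lemma maxout_ge0 c v : 0 <= maxoutside c v.
Proof.
rewrite /maxoutside; elim/big_rec: _ => // i x _ hx.
by rewrite le_max hx orbT.
Qed.

Lemma maxout_ex c v : maxoutside c v = 0 \/ exists2 u, u \notin c & maxoutside c v = v u.
Proof.
rewrite /maxoutside.
apply: (big_ind (fun x => x = 0 \/ exists2 u, u \notin c & x = v u)).
- by left.
- move=> x y hx hy; rewrite /Order.max; case: ifP => _; [exact: hy | exact: hx].
- by move=> i; rewrite inE => ic; right; exists i.
Qed.

Definition gap c v := Order.max 0 (minover c v - maxoutside c v).

Lemma gap_ge0 c v : 0 <= gap c v.
Proof. by rewrite /gap le_max lexx. Qed.

Lemma gap_pos c v : 0 < gap c v -> maxoutside c v < minover c v.
Proof. by rewrite /gap lt_max ltxx /= subr_gt0. Qed.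

Lemma gap_zero c v w : w \in c -> v w <= 0 -> gap c v = 0.
Proof.
move=> wc vw; rewrite /gap; apply/max_idPl; rewrite subr_le0.
exact: le_trans (minover_le v wc) (le_trans vw (maxout_ge0 c v)).
Qed.

Lemma gap_superlevel c v u u' : 0 < gap c v -> u \in c -> u' \notin c -> v u' < v u.
Proof.
move=> /gap_pos h uc u'c.
exact: le_lt_trans (maxout_ge v u'c) (lt_le_trans h (minover_le v uc)).
Qed.

Lemma gap_supp c v u : 0 < gap c v -> u \in c -> 0 < v u.
Proof.
move=> /gap_pos h uc.
exact: le_lt_trans (maxout_ge0 c v) (lt_le_trans h (minover_le v uc)).
Qed.



Lemma sdhE (S : pred T) (le : rel T) v c :
  sd_homeo S le v c = if sd_vertex S le c then #|c|%:R * gap c v else 0.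
Proof. by []. Qed.

Lemma sdh_ge0 (S : pred T) (le : rel T) v c : 0 <= sd_homeo S le v c.
Proof. by rewrite sdhE; case: ifP => // _; rewrite mulr_ge0 // gap_ge0. Qed.

Lemma sdh_pos (S : pred T) (le : rel T) v c : 0 < sd_homeo S le v c ->
  sd_vertex S le c /\ 0 < gap c v.
Proof.
rewrite sdhE; case: ifP => [sv|_]; last by rewrite ltxx.
move=> h; split => //; have := gap_ge0 c v; rewrite le_eqVlt => /orP [/eqP g0|//].
by rewrite -g0 mulr0 ltxx in h.
Qed.

Lemma sdh_good (S : pred T) (le : rel T) v :
  goodp (sd_vertex S le) (fun c1 c2 => c1 \subset c2) (sd_homeo S le v).
Proof.
split.
- exact: sdh_ge0.
- by move=> c nc; rewrite sdhE (negbTE nc).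
- move=> c1 c2 /sdh_pos [_ g1] /sdh_pos [_ g2].
  case/boolP: (c1 \subset c2) => //= n12.
  have [u1 u1c1 u1n2] := fintype.subsetPn n12.
  apply/fintype.subsetP => u2 u2c2; apply/negPn/negP => u2n1.
  have h1 := gap_superlevel g1 u1c1 u2n1; have h2 := gap_superlevel g2 u2c2 u1n2.
  by have := lt_trans h1 h2; rewrite ltxx.
Qed.

Lemma gap_out v w : (forall u, 0 <= v u) -> ~~ (0 < v w) ->
  \sum_(c : {set T} | w \in c) gap c v = v w.
Proof.
move=> v0 vw; have vw0 : v w = 0 by apply/eqP; rewrite eq_le v0 andbT leNgt.
by rewrite vw0 big1 // => c wc; apply: gap_zero wc _; rewrite vw0.
Qed.

Lemma gap_elem_ind n : forall v, (#|[set u | (0 < v u)%R]%SET| <= n)%N ->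
  (forall u, 0 <= v u) -> (forall u, v u <= 1) ->
  forall w, \sum_(c : {set T} | w \in c) gap c v = v w.
Proof.
elim: n => [|n IH] v hn v0 v1 w.
  apply: gap_out => //; apply/negP => vw.
  have : (0 < #|[set u | (0 < v u)%R]%SET|)%N by apply/card_gt0P; exists w; rewrite inE.
  by rewrite leqn0 in hn; rewrite (eqP hn).
case/boolP: (0 < v w) => vw; last exact: gap_out.
set U := [set u | (0 < v u)%R]%SET.
have wU : w \in U by rewrite inE.
have [u0 u0U mE] := minover_ex (c:=U) v1 (ex_intro _ w wU).
set m := minover U v in mE.
have m_pos : 0 < m by rewrite mE; move: u0U; rewrite inE.
have m_le u : u \in U -> m <= v u by move=> uU; apply: minover_le.
have vnU u : u \notin U -> v u = 0.
  by move=> uU; apply/eqP; rewrite eq_le v0 andbT leNgt; move: uU; rewrite inE.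
pose v' := fun u => if u \in U then v u - m else 0.
have v'0 u : 0 <= v' u.
  by rewrite /v'; case: ifP => // uU; rewrite subr_ge0 m_le.
have v'1 u : v' u <= 1.
  rewrite /v'; case: ifP => // uU; have := v1 u; have := m_le u uU; lra.
have hn' : (#|[set u | (0 < v' u)%R]%SET| <= n)%N.
  rewrite -ltnS; apply: leq_trans hn; apply: proper_card; apply/properP; split.
    apply/fintype.subsetP => u; rewrite [in X in X -> _]inE /v'.
    by case: ifP => [uU _|_]; [move: uU; rewrite ?inE | rewrite ltxx].
  exists u0 => //; rewrite inE /v' u0U mE subrr ltxx //.
have IHw := IH v' hn' v'0 v'1 w.
have gU : gap U v = m.
  rewrite /gap; have -> : maxoutside U v = 0.
    case: (maxout_ex U v) => // -[u uU ->]; exact: vnU.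
  by rewrite subr0; apply/max_idPr; exact: ltW.
have gU' : gap U v' = 0 by apply: (gap_zero u0U); rewrite /v' u0U mE subrr.
have geq c : w \in c -> c != U -> gap c v = gap c v'.
  move=> wc cU; case/boolP: (c \subset U) => csub; last first.
    have [u uc uU] := fintype.subsetPn csub.
    rewrite (gap_zero uc (_ : v u <= 0)); last by rewrite vnU.
    by rewrite (gap_zero uc (_ : v' u <= 0)) // /v' (negbTE uU).
  have [u1 u1U u1c] : exists2 u, u \in U & u \notin c.
    have : c \proper U by rewrite finset.properEneq cU csub.
    by move=> /properP [_ [u ? ?]]; exists u.
  have [uc ucc ucE] := minover_ex (c:=c) v1 (ex_intro _ w wc).
  have [uc' uc'c uc'E] := minover_ex (c:=c) v'1 (ex_intro _ w wc).
  have ucU := fintype.subsetP csub _ ucc; have uc'U := fintype.subsetP csub _ uc'c.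
  have e1 : minover c v' = minover c v - m.
    have h1 := minover_le v' ucc; have h2 := minover_le v uc'c.
    move: h1 h2; rewrite uc'E ucE /v' ucU uc'U; lra.
  have Mge := maxout_ge v u1c.
  have mu1 := m_le u1 u1U.
  have [Mc Mcc McE] : exists2 u, u \notin c & maxoutside c v = v u.
    case: (maxout_ex c v) => // M0; move: Mge; rewrite M0; lra.
  have McU : Mc \in U by rewrite inE -McE; lra.
  have e2 : maxoutside c v' = maxoutside c v - m.
    apply/eqP; rewrite eq_le; apply/andP; split.
      case: (maxout_ex c v') => [->|[u' u'c ->]]; first lra.
      rewrite /v'; case: ifP => u'U; last lra.
      have := maxout_ge v u'c; lra.
    have := maxout_ge v' Mcc; rewrite /v' McU; lra.
  by rewrite /gap e1 e2; congr Order.max; lra.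
rewrite (bigD1 U) //= gU.
move: IHw; rewrite (bigD1 U) //= gU' add0r /v' wU => IHw.
rewrite (eq_bigr (fun c => gap c v')); last by move=> c /andP[wc cU]; exact: geq.
rewrite IHw; lra.
Qed.


Lemma gap_elem v : (forall u, 0 <= v u) -> (forall u, v u <= 1) ->
  forall w, \sum_(c : {set T} | w \in c) gap c v = v w.
Proof. by move=> v0 v1; apply: (gap_elem_ind (leqnn _)). Qed.

Lemma sdh_sum (S : pred T) (le : rel T) v : goodp S le v -> (forall w, v w <= 1) ->
  \sum_c sd_homeo S le v c = \sum_w v w.
Proof.
move=> [v0 vS vch] v1.
have E c : sd_homeo S le v c = #|c|%:R * gap c v.
  rewrite sdhE; case: ifP => // nsv.
  case/boolP: (0 < gap c v) => gp; last first.
    rewrite (_ : gap c v = 0) ?mulr0 //; apply/eqP.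
    by rewrite eq_le gap_ge0 andbT leNgt.
  case c0: (#|c| == 0)%N; first by rewrite (eqP c0) mul0r.
  have supS u : u \in c -> S u.
    move=> uc; have := gap_supp gp uc; apply: contraTT => /vS ->; by rewrite ltxx.
  move: nsv; rewrite /sd_vertex lt0n c0 /=.
  have -> : c \subset S by apply/fintype.subsetP => u /supS.
  suff -> : is_chain le c by [].
  apply/forall_inP => u uc; apply/forall_inP => u' u'c.
  exact: vch (gap_supp gp uc) (gap_supp gp u'c).
rewrite (eq_bigr (fun c => \sum_(w in c) gap c v)); last first.
  by move=> c _; rewrite E sumr_const mulr_natl.
rewrite (eq_bigr (fun c => \sum_w (if w \in c then gap c v else 0))); last first.
  by move=> c _; rewrite big_mkcond.
rewrite exchange_big /=; apply: eq_bigr => w _.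
by rewrite -big_mkcond /=; apply: gap_elem.
Qed.

End SD.
End Real.


Section Cts.
Variable R : realType.

Lemma cts_coord (T : finType) (w : T) : continuous (fun t : rpoint R T => t w).
Proof. exact: (@proj_continuous T (fun _ => R) w). Qed.

Lemma cts_into (X : topologicalType) (T : finType) (F : X -> rpoint R T) :
  (forall w, continuous (fun x => F x w)) -> continuous F.
Proof.
move=> H x. apply/cvg_sup => w.
move=> U [? [[W oW <-]] /= Wsfz] /filterS; apply; apply: (H w x).
exact: open_nbhs_nbhs.
Qed.

Lemma cts_fst (T : finType) : continuous (fun p : R * rpoint R T => p.1).
Proof. move=> p; exact: cvg_fst. Qed.
Lemma cts_snd (T : finType) : continuous (fun p : R * rpoint R T => p.2).
Proof. move=> p; exact: cvg_snd. Qed.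

Lemma cts_comp (X Y Z : topologicalType) (f : X -> Y) (g : Y -> Z) :
  continuous f -> continuous g -> continuous (fun x => g (f x)).
Proof. move=> cf cg x; exact: continuous_comp (cf x) (cg (f x)). Qed.

Lemma cts_cst (X : topologicalType) (c : R) : continuous (fun _ : X => c).
Proof. move=> x; exact: cvg_cst. Qed.

Lemma cts_add (X : topologicalType) (f g : X -> R) :
  continuous f -> continuous g -> continuous (fun x => f x + g x).
Proof. move=> cf cg x; exact: cvgD (cf x) (cg x). Qed.

Lemma cts_opp (X : topologicalType) (f : X -> R) :
  continuous f -> continuous (fun x => - f x).
Proof. move=> cf x; exact: cvgN (cf x). Qed.

Lemma cts_mul (X : topologicalType) (f g : X -> R) :
  continuous f -> continuous g -> continuous (fun x => f x * g x).
Proof. move=> cf cg x; exact: cvgM (cf x) (cg x). Qed.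

Lemma cts_min (X : topologicalType) (f g : X -> R) :
  continuous f -> continuous g -> continuous (fun x => Order.min (f x) (g x)).
Proof. move=> cf cg x; exact: (@continuous_min R X f g x (cf x) (cg x)). Qed.

Lemma cts_max (X : topologicalType) (f g : X -> R) :
  continuous f -> continuous g -> continuous (fun x => Order.max (f x) (g x)).
Proof. move=> cf cg x; exact: (@continuous_max R X f g x (cf x) (cg x)). Qed.

Lemma cts_sum (X : topologicalType) (I : Type) (r : seq I) (P : pred I) (F : I -> X -> R) :
  (forall i, continuous (F i)) -> continuous (fun x => \sum_(i <- r | P i) F i x).
Proof.
move=> cF; elim: r => [|i r IH].
  under eq_fun do rewrite big_nil. exact: cts_cst.
under eq_fun do rewrite big_cons.
case: (P i); last exact: IH.
exact: cts_add.
Qed.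

Lemma cts_bigmin (X : topologicalType) (I : Type) (r : seq I) (P : pred I) (F : I -> X -> R) (c : R) :
  (forall i, continuous (F i)) -> continuous (fun x => \big[Order.min/c]_(i <- r | P i) F i x).
Proof.
move=> cF; elim: r => [|i r IH].
  under eq_fun do rewrite big_nil. exact: cts_cst.
under eq_fun do rewrite big_cons.
case: (P i); last exact: IH.
exact: cts_min.
Qed.
Lemma cts_bigmax (X : topologicalType) (I : Type) (r : seq I) (P : pred I) (F : I -> X -> R) (c : R) :
  (forall i, continuous (F i)) -> continuous (fun x => \big[Order.max/c]_(i <- r | P i) F i x).
Proof.
move=> cF; elim: r => [|i r IH].
  under eq_fun do rewrite big_nil. exact: cts_cst.
under eq_fun do rewrite big_cons.
case: (P i); last exact: IH.
exact: cts_max.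
Qed.
End Cts.

Section Main.
Variable R : realType.
Variable A : finType.
Local Notation P := (dorder A).
Local Notation regP := (fun o : dorder A => `[< regular o >]).
Local Notation semP := (fun o : dorder A => `[< semi_regular o >]).
Local Notation Fr := (realize (R:=R) (@Fmap A)).
Local Notation Gr t := (realize (R:=R) (@Gmap A) (sd_homeo regP (@dsq A) t)).

Lemma Fr_good (v : rpoint R P) : goodp semP (@dsub A) v -> goodp regP (@dsq A) (Fr v).
Proof.
move=> gv; apply: realize_good gv _ _.
  by move=> a /asboolP /item1 /asboolP.
move=> a b /asboolP [da _] /asboolP [db _]; exact: item2.
Qed.

Lemma Gr_good (v : rpoint R P) : goodp semP (@dsub A) (Gr v).
Proof.
apply: realize_good (sdh_good _ _ _) _ _.
  by move=> c /item3 /asboolP.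
by move=> c1 c2 v1 v2 s12; apply: item4.
Qed.

Lemma good_le1 (T : finType) (S : pred T) (le : rel T) (v : T -> R) :
  goodp S le v -> \sum_w v w <= 1 -> forall w, v w <= 1.
Proof. by case=> v0 _ _ s1 w; exact: le_trans (sum_ge_term w v0) s1. Qed.

Lemma Gr_sum (v : rpoint R P) : goodp regP (@dsq A) v -> \sum_w v w <= 1 ->
  \sum_w Gr v w = \sum_w v w.
Proof.
move=> gv s1; rewrite realize_sum; exact: (sdh_sum gv (good_le1 gv s1)).
Qed.

Lemma Fr_mem (t : rpoint R P) : realization semP (@dsub A) t ->
  realization regP (@dsq A) (Fr t).
Proof.
move=> /realizationP [gt st]; apply/realizationP; split; first exact: Fr_good.
by rewrite realize_sum.
Qed.

Lemma Gr_mem (t : rpoint R P) : realization regP (@dsq A) t ->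
  realization semP (@dsub A) (Gr t).
Proof.
move=> /realizationP [gt st]; apply/realizationP; split; first exact: Gr_good.
by rewrite Gr_sum // st.
Qed.


Lemma cts_realize (T T' : finType) (f : T -> T') :
  continuous (realize (R:=R) f : rpoint R T -> rpoint R T').
Proof. apply: cts_into => w; rewrite /realize; apply: cts_sum => a; exact: cts_coord. Qed.

Lemma cts_sdh (T : finType) (S : pred T) (le : rel T) :
  continuous (sd_homeo (R:=R) S le : rpoint R T -> rpoint R {set T}).
Proof.
apply: cts_into => c; rewrite /sd_homeo; case: (sd_vertex S le c); last exact: cts_cst.
apply: cts_mul; first exact: cts_cst.
apply: cts_max; first exact: cts_cst.
apply: cts_add; last apply: cts_opp; rewrite /minover /maxoutside;
  [apply: cts_bigmin | apply: cts_bigmax] => u; exact: cts_coord.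
Qed.

Lemma cts_Fr : continuous (Fr : rpoint R P -> rpoint R P).
Proof. exact: cts_realize. Qed.

Lemma cts_Gr : continuous (fun t : rpoint R P => Gr t).
Proof.
have h1 := cts_sdh (T:=P) (S:=regP) (le:=@dsq A).
have h2 := cts_realize (T:={set P}) (f:=@Gmap A).
exact: (cts_comp h1 h2).
Qed.

Lemma realize_act (T T' : finType) (f : T -> T') (g gi : T -> T) (g' gi' : T' -> T')
  (t : rpoint R T) :
  cancel g gi -> cancel gi g -> cancel g' gi' -> cancel gi' g' ->
  (forall u, t u != 0 -> f (gi u) = gi' (f u)) ->
  realize f (fun v => t (g v)) = (fun w => realize f t (g' w)).
Proof.
move=> K1 K2 K3 K4 H; apply: funext => w; rewrite /realize.
rewrite (reindex gi) /=; last by apply: onW_bij; exact: (Bijective K2 K1).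
rewrite (eq_bigr (fun u => t u)) => [|u _]; last by rewrite K2.
rewrite [LHS]big_mkcond [RHS]big_mkcond; apply: eq_bigr => u _.
case: (eqVneq (t u) 0) => [->|tu]; first by rewrite !if_same.
rewrite H //; congr (if _ then _ else _); apply/eqP/eqP => [<-|->].
  by rewrite K4.
by rewrite K3.
Qed.

Lemma Fr_act (s : {perm A}) (t : rpoint R P) :
  Fr (pt_act (dact s) t) = pt_act (dact s) (Fr t).
Proof.
rewrite /pt_act; apply: realize_act; try exact: dactK; try exact: dactKV.
by move=> u _; rewrite Fmap_act.
Qed.

Lemma big_imset_act (s : {perm A}) (c : {set P}) (F : P -> R) (op : SemiGroup.com_law R) x :
  \big[op/x]_(j in dact s @: c) F j = \big[op/x]_(i in c) F (dact s i).
Proof.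
rewrite (reindex (dact s)) /=; last by apply: onW_bij; exact: (Bijective (dactK s) (dactKV s)).
by apply: eq_bigl => i; rewrite mem_imset //; exact: dact_inj.
Qed.

Lemma big_imsetC_act (s : {perm A}) (c : {set P}) (F : P -> R) (op : SemiGroup.com_law R) x :
  \big[op/x]_(j in ~: (dact s @: c)) F j = \big[op/x]_(i in ~: c) F (dact s i).
Proof.
rewrite (reindex (dact s)) /=; last by apply: onW_bij; exact: (Bijective (dactK s) (dactKV s)).
by apply: eq_bigl => i; rewrite !inE mem_imset //; exact: dact_inj.
Qed.

Lemma sdh_act (s : {perm A}) (t : rpoint R P) :
  sd_homeo regP (@dsq A) (pt_act (dact s) t) =
  (fun c => sd_homeo regP (@dsq A) t (dact s @: c)).
Proof.
apply: funext => c; rewrite !sdhE sdv_act card_imset; last exact: dact_inj.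
by rewrite /gap /minover /maxoutside big_imset_act big_imsetC_act.
Qed.

Lemma imset_actK (s : {perm A}) : cancel (fun c : {set P} => dact s @: c) (fun c => dact s^-1 @: c).
Proof.
move=> c; rewrite -imset_comp (eq_imset _ (dactK s)) imset_id //.
Qed.

Lemma Gr_act (s : {perm A}) (t : rpoint R P) :
  Gr (pt_act (dact s) t) = pt_act (dact s) (Gr t).
Proof.
rewrite sdh_act /pt_act.
refine (realize_act (t := sd_homeo regP (@dsq A) t) (g := fun c : {set P} => dact s @: c) (gi := fun c : {set P} => dact s^-1 @: c) (g' := dact s) (gi' := dact s^-1) _ _ _ _ _).
- exact: imset_actK.
- by move=> c; have := imset_actK s^-1 c; rewrite invgK.
- exact: dactK.
- exact: dactKV.
- move=> c; rewrite sdhE; case: ifP => [cv _|_]; last by rewrite eqxx.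
  exact: Gmap_act.
Qed.

End Main.


Section Homot.
Variable R : realType.
Variable A : finType.
Local Notation P := (dorder A).
Local Notation regP := (fun o : dorder A => `[< regular o >]).
Local Notation semP := (fun o : dorder A => `[< semi_regular o >]).
Local Notation Fr := (realize (R:=R) (@Fmap A)).
Local Notation Gr t := (realize (R:=R) (@Gmap A) (sd_homeo regP (@dsq A) t)).

Definition up (t : rpoint R P) (o : P) : R := \sum_(x | dsub o x && (x != o)) t x.
Definition th (p : R * rpoint R P) : rpoint R P :=
  fun o => Order.min (p.2 o) (Order.max 0 (p.1 - up p.2 o)).
Definition tl (p : R * rpoint R P) : rpoint R P := fun o => p.2 o - th p o.
Definition H1 (p : R * rpoint R P) : rpoint R P := fun w => Gr (Fr (tl p)) w + th p w.
Definition H2 (p : R * rpoint R P) : rpoint R P :=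
  fun w => (1 - p.1) * Fr (Gr p.2) w + p.1 * p.2 w.

Lemma ctsE (X Y Z : topologicalType) (f : X -> Y) (g : Y -> Z) (h : X -> Z) :
  continuous f -> continuous g -> (forall x, h x = g (f x)) -> continuous h.
Proof. move=> cf cg e; rewrite (funext e); exact: cts_comp. Qed.

Lemma cts_snd_coord o : continuous (fun p : R * rpoint R P => p.2 o).
Proof. by apply: (ctsE (@cts_snd R P) (cts_coord (w:=o))). Qed.

Lemma cts_up o : continuous (fun p : R * rpoint R P => up p.2 o).
Proof.
rewrite /up; apply: cts_sum => x; exact: cts_snd_coord.
Qed.

Lemma cts_th : continuous th.
Proof.
apply: cts_into => o; rewrite /th; apply: cts_min.
  exact: cts_snd_coord.
apply: cts_max; first exact: cts_cst.
apply: cts_add; [exact: cts_fst | apply: cts_opp; exact: cts_up].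
Qed.

Lemma cts_tl : continuous tl.
Proof.
apply: cts_into => o; rewrite /tl; apply: cts_add.
  exact: cts_snd_coord.
apply: cts_opp; by apply: (ctsE cts_th (cts_coord (w:=o))).
Qed.

Lemma cts_H1 : continuous H1.
Proof.
apply: cts_into => w; rewrite /H1; apply: cts_add.
  apply: (ctsE cts_tl (g := fun t => Gr (Fr t) w)) => //.
  apply: (ctsE (@cts_Fr R A) (g := fun t => Gr t w)) => //.
  by apply: (ctsE (@cts_Gr R A) (cts_coord (w:=w))).
by apply: (ctsE cts_th (cts_coord (w:=w))).
Qed.

Lemma cts_H2 : continuous H2.
Proof.
apply: cts_into => w; rewrite /H2; apply: cts_add; apply: cts_mul.
- apply: cts_add; [exact: cts_cst | apply: cts_opp; exact: cts_fst].
- apply: (ctsE (@cts_snd R P) (g := fun t => Fr (Gr t) w)) => //.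
  apply: (ctsE (@cts_Gr R A) (g := fun t => Fr t w)) => //.
  by apply: (ctsE (@cts_Fr R A) (cts_coord (w:=w))).
- exact: cts_fst.
- exact: cts_snd_coord.
Qed.


Lemma up_act (s : {perm A}) (t : rpoint R P) o :
  up (pt_act (dact s) t) o = up t (dact s o).
Proof.
rewrite /up /pt_act (reindex (dact s^-1)) /=; last first.
  by apply: onW_bij; exact: (Bijective (dactKV s) (dactK s)).
apply: eq_big => [x|x _]; last by rewrite dactKV.
by rewrite -(dsub_act s) dactKV (can2_eq (dactKV s) (dactK s)).
Qed.

Lemma th_act (s : {perm A}) x (t : rpoint R P) :
  th (x, pt_act (dact s) t) = pt_act (dact s) (th (x, t)).
Proof. by apply: funext => o; rewrite /th /= up_act. Qed.

Lemma tl_act (s : {perm A}) x (t : rpoint R P) :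
  tl (x, pt_act (dact s) t) = pt_act (dact s) (tl (x, t)).
Proof. by apply: funext => o; rewrite /tl th_act. Qed.

Lemma H1_act (s : {perm A}) x (t : rpoint R P) :
  H1 (x, pt_act (dact s) t) = pt_act (dact s) (H1 (x, t)).
Proof.
apply: funext => w; rewrite /H1 tl_act (@Fr_act R A) (@Gr_act R A) th_act.
by [].
Qed.

Lemma H2_act (s : {perm A}) x (t : rpoint R P) :
  H2 (x, pt_act (dact s) t) = pt_act (dact s) (H2 (x, t)).
Proof.
apply: funext => w; rewrite /H2 /= (@Gr_act R A) (@Fr_act R A).
by [].
Qed.

Lemma H2_0 (t : rpoint R P) : H2 (0, t) = Fr (Gr t).
Proof. by apply: funext => w; rewrite /H2 /= subr0 mul1r mul0r addr0. Qed.

Lemma H2_1 (t : rpoint R P) : H2 (1, t) = t.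
Proof. by apply: funext => w; rewrite /H2 /= subrr mul0r add0r mul1r. Qed.

Lemma up_ge0 (t : rpoint R P) o : (forall u, 0 <= t u) -> 0 <= up t o.
Proof. by move=> t0; apply: sumr_ge0. Qed.

Lemma sum_sub_le (I : finType) (Pp Q : pred I) (F : I -> R) :
  (forall i, 0 <= F i) -> (forall i, Pp i -> Q i) ->
  \sum_(i | Pp i) F i <= \sum_(i | Q i) F i.
Proof.
move=> F0 PQ; rewrite [X in X <= _]big_mkcond [X in _ <= X]big_mkcond.
apply: ler_sum => i _; case: ifP => pi; first by rewrite (PQ i pi).
by case: ifP.
Qed.

Lemma up_add (t : rpoint R P) o : (forall u, 0 <= t u) -> up t o + t o <= \sum_u t u.
Proof.
move=> t0; rewrite [X in _ <= X](bigD1 o) //= [X in X <= _]addrC lerD2l.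
by apply: sum_sub_le => // x /andP[].
Qed.

Lemma H1_0 (t : rpoint R P) : (forall u, 0 <= t u) -> H1 (0, t) = Gr (Fr t).
Proof.
move=> t0; have thE : th (0, t) = (fun _ => 0).
  apply: funext => o; rewrite /th /=.
  have -> : Order.max 0 (0 - up t o) = 0.
    by apply/max_idPl; rewrite sub0r oppr_le0 up_ge0.
  by apply/min_idPr; exact: t0.
have tlE : tl (0, t) = t by apply: funext => o; rewrite /tl thE subr0.
by apply: funext => w; rewrite /H1 tlE thE addr0.
Qed.

Lemma Gr_Fr0 : Gr (Fr (fun _ : P => 0)) = (fun _ => 0).
Proof.
have g0 : goodp semP (@dsub A) (fun _ : P => (0:R)).
  by split => // a b; rewrite ltxx.
have gF := Fr_good g0.
have sF : \sum_w Fr (fun _ : P => 0) w = 0 by rewrite realize_sum big1.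
have gG := @Gr_good R A (Fr (fun _ : P => 0)).
have sG : \sum_w Gr (Fr (fun _ : P => 0)) w = 0.
  by rewrite Gr_sum // sF.
apply: funext => w; apply: (sum_eq0_all _ sG); by case: gG.
Qed.

Lemma H1_1 (t : rpoint R P) : realization semP (@dsub A) t -> H1 (1, t) = t.
Proof.
move=> /realizationP [[t0 _ _] st].
have thE : th (1, t) = t.
  apply: funext => o; rewrite /th /=; have := up_add o t0; rewrite st => h.
  have -> : Order.max 0 (1 - up t o) = 1 - up t o.
    by apply/max_idPr; have := t0 o; lra.
  by apply/min_idPl; lra.
have tlE : tl (1, t) = (fun _ => 0) by apply: funext => o; rewrite /tl thE subrr.
by apply: funext => w; rewrite /H1 tlE thE Gr_Fr0 add0r.
Qed.


Lemma reg_sep (o : P) a b : regular o -> (a, b) \in o.2 ->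
  ((a, b) \notin o.1) && ((b, a) \notin o.1).
Proof.
move=> [_ [_ sep]] ab; apply/andP; split; apply/negP => h; move: (sep _ _ h).
  by rewrite ab.
by rewrite ab andbF.
Qed.

Lemma K2 (c : {set P}) (o : P) : sd_vertex regP (@dsq A) c -> regular o ->
  (forall m, m \in c -> dsq m o || dsq o m) ->
  dsq (Fmap (Gmap c)) o || dsq o (Fmap (Gmap c)).
Proof.
move=> cv ro cmp.
have [tc tH] := top_spec cv; have [bc bH] := bot_spec cv.
have [[_ [[irrB trB] _]] _] := sdv_reg cv bc.
have /andP[bt1 bt2] := bH _ tc.
have cmpB := cmp _ bc.
case/orP: (cmp _ tc); rewrite /Gmap /Fmap /dsq /=; move=> /andP[h1 h2].
  apply/orP; left; rewrite h1 /=; apply/fintype.subsetP => -[a b] ab; rewrite rdiffE.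
  have /andP[n1 n2] := reg_sep ro ab.
  rewrite (fintype.subsetP bt2 _ (fintype.subsetP h2 _ ab)) /=.
  apply/andP; split; [apply: contra n1 | apply: contra n2]; exact: (fintype.subsetP h1).
apply/orP; right; rewrite h1 /=; apply/fintype.subsetP => -[a b].
rewrite rdiffE; move=> /and3P[ab na nb].
have neq : a != b by apply/eqP => eab; rewrite eab in ab; move: (irrB b); rewrite ab.
case: ro => [[_ [_ tot]] _]; move: (tot a b neq) => /or4P [h|h|//|h].
- by move: na; rewrite (fintype.subsetP h1 _ h).
- by move: nb; rewrite (fintype.subsetP h1 _ h).
- case/orP: cmpB => /andP[k1 k2].
    by move: (irrB a); rewrite (trB _ _ _ ab (fintype.subsetP k2 _ h)).
  exact: (fintype.subsetP k2).
Qed.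

Lemma Gr_ge0 (v : rpoint R P) w : 0 <= Gr v w.
Proof. by case: (@Gr_good R A v) => h _ _; exact: h. Qed.

Lemma dir2 (t : rpoint R P) a b : realization regP (@dsq A) t ->
  0 < Fr (Gr t) a -> 0 < t b -> dsq a b || dsq b a.
Proof.
move=> /realizationP [[t0 tS tch] _] ha hb.
have [y1 [<- ho]] := realize_pos (@Gr_ge0 t) ha.
have [c [<- hc]] := realize_pos (sdh_ge0 _ _ _) ho.
have [cv gc] := sdh_pos hc.
have rb : regular b.
  apply/asboolP; apply/negPn/negP => nb; move: hb; rewrite (tS b nb) ltxx.
  by [].
apply: K2 cv rb _ => m mc; exact: tch (gap_supp gc mc) hb.
Qed.

Lemma th_le (x : R) (t : rpoint R P) u : th (x, t) u <= t u.
Proof. by rewrite /th /= ge_min lexx. Qed.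

Lemma th_ge0 (x : R) (t : rpoint R P) u : 0 <= t u -> 0 <= th (x, t) u.
Proof. by move=> t0; rewrite /th /= le_min t0 le_max lexx. Qed.

Lemma dir1 (x : R) (t : rpoint R P) o o' : goodp semP (@dsub A) t ->
  0 < tl (x, t) o -> 0 < th (x, t) o' -> dsub o o'.
Proof.
move=> [t0 _ tch] hl hh.
move: hh; rewrite /th /= lt_min lt_max ltxx /= => /andP [to' xo'].
move: hl; rewrite /tl /th /= subr_gt0 gt_min ltxx /= gt_max => /andP [to xo].
case/boolP: (dsub o o') => // n.
have h : dsub o' o by move: (tch o o' to to'); rewrite (negbTE n).
have neq : o != o' by apply: contra n => /eqP ->; rewrite dsub_refl.
have : up t o' >= t o + up t o.
  rewrite /up [X in _ <= X](bigD1 o) /=; last by rewrite h neq.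
  rewrite lerD2l; apply: sum_sub_le => // y /andP[dy ny].
  rewrite ny andbT (dsub_trans h dy) /=.
  by apply: contra n => /eqP <-.
lra.
Qed.

Lemma rdiff_sub (r1 r2 : {set A * A}) : rdiff r1 r2 \subset r1.
Proof. by apply/fintype.subsetP => p; rewrite inE => /andP[]. Qed.

Lemma K1 (x : R) (t : rpoint R P) a b : goodp semP (@dsub A) t ->
  0 < Gr (Fr (tl (x, t))) a -> 0 < th (x, t) b -> dsub a b.
Proof.
move=> gt ha hb; have [t0 _ _] := gt.
have l0 u : 0 <= tl (x, t) u by rewrite /tl subr_ge0 th_le.
have [c [<- hc]] := realize_pos (sdh_ge0 _ _ _) ha.
have [cv gc] := sdh_pos hc.
have [tc _] := top_spec cv; have [bc _] := bot_spec cv.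
have [xT [eT lT]] := realize_pos l0 (gap_supp gc tc).
have [xB [eB lB]] := realize_pos l0 (gap_supp gc bc).
have /andP[d1 _] := dir1 gt lT hb.
have /andP[_ d2] := dir1 gt lB hb.
rewrite /Gmap -eT -eB /Fmap /dsub /= d1 /=.
exact: fintype.subset_trans (rdiff_sub _ _) d2.
Qed.


Lemma pos_add_split (u v : R) : 0 <= u -> 0 <= v -> 0 < u + v -> 0 < u \/ 0 < v.
Proof.
move=> u0 v0 h; case: (ltP 0 u) => [|hu]; first by left.
by right; lra.
Qed.

Lemma pos_mul_r (a b : R) : 0 <= b -> 0 < a * b -> 0 < b.
Proof.
move=> b0 h; case: (ltP 0 b) => // hb.
have e : b = 0 by apply/le_anti; rewrite hb b0.
by rewrite e mulr0 ltxx in h.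
Qed.

Lemma H2_mem (x : R) (t : rpoint R P) : 0 <= x <= 1 ->
  realization regP (@dsq A) t -> realization regP (@dsq A) (H2 (x, t)).
Proof.
move=> /andP[x0 x1] Xt.
have Xu := Fr_mem (Gr_mem Xt).
move: (Xt) (Xu) => /realizationP [[t0 tS tch] st] /realizationP [[u0 uS uch] su].
have x0' : 0 <= 1 - x by rewrite subr_ge0.
apply/realizationP; split; [split|].
- by move=> w; rewrite /H2 /=; apply: addr_ge0; apply: mulr_ge0.
- by move=> w nw; rewrite /H2 /= (uS w nw) (tS w nw) !mulr0 addr0.
- have sp w : 0 < H2 (x, t) w -> 0 < Fr (Gr t) w \/ 0 < t w.
    rewrite /H2 /= => h.
    case: (pos_add_split (mulr_ge0 x0' (u0 w)) (mulr_ge0 x0 (t0 w)) h) => h'.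
      by left; exact: pos_mul_r (u0 w) h'.
    by right; exact: pos_mul_r (t0 w) h'.
  move=> a b ha hb.
  case: (sp a ha) => [ua|ta]; case: (sp b hb) => [ub|tb].
  + exact: uch.
  + exact: dir2 Xt ua tb.
  + by rewrite orbC; exact: dir2 Xt ub ta.
  + exact: tch.
- rewrite /H2 /= big_split /= -!mulr_sumr su st; lra.
Qed.

Lemma H1_mem (x : R) (t : rpoint R P) : 0 <= x <= 1 ->
  realization semP (@dsub A) t -> realization semP (@dsub A) (H1 (x, t)).
Proof.
move=> /andP[x0 x1] /realizationP [gt st]; have [t0 tS tch] := gt.
have h0 u : 0 <= th (x, t) u by apply: th_ge0.
have hle u : th (x, t) u <= t u by apply: th_le.
have l0 u : 0 <= tl (x, t) u by rewrite /tl subr_ge0.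
have lle u : tl (x, t) u <= t u by rewrite /tl /=; have := h0 u; lra.
have gl : goodp semP (@dsub A) (tl (x, t)).
  split => //.
    move=> w nw; have := tS w nw; have := h0 w; have := hle w; rewrite /tl /=; lra.
  move=> a b la lb; apply: tch; [exact: lt_le_trans la (lle a) | exact: lt_le_trans lb (lle b)].
have sl : \sum_w tl (x, t) w <= 1 by rewrite -st; apply: ler_sum => w _; exact: lle.
have gFl := Fr_good gl.
have sFl : \sum_w Fr (tl (x, t)) w = \sum_w tl (x, t) w by apply: realize_sum.
have gG := @Gr_good R A (Fr (tl (x, t))).
have sG : \sum_w Gr (Fr (tl (x, t))) w = \sum_w tl (x, t) w by rewrite Gr_sum // sFl.
case: (gG) => G0 GS Gch.
apply/realizationP; split; [split|].
- by move=> w; rewrite /H1; apply: addr_ge0.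
- move=> w nw; rewrite /H1 GS // add0r.
  have := tS w nw; have := h0 w; have := hle w; lra.
- have sp w : 0 < H1 (x, t) w -> 0 < Gr (Fr (tl (x, t))) w \/ 0 < th (x, t) w.
    by rewrite /H1 => h; apply: pos_add_split.
  move=> a b ha hb.
  case: (sp a ha) => [ua|ta]; case: (sp b hb) => [ub|tb].
  + exact: Gch.
  + by rewrite (K1 gt ua tb).
  + by rewrite (K1 gt ub ta) orbT.
  + by apply: tch; [exact: lt_le_trans ta (hle a) | exact: lt_le_trans tb (hle b)].
- rewrite /H1 big_split /= sG -st -big_split; apply: eq_bigr => w _.
  rewrite /tl /=; lra.
Qed.

End Homot.


Unset Implicit Arguments. Set Strict Implicit.

Theorem proposition4p8 (R : realType) (A : finType) :
  let RA : pred (dorder A) := fun o => `[< regular o >] in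
  let RpA : pred (dorder A) := fun o => `[< semi_regular o >] in
  let sdR := sd_vertex RA (@dsq A) in
  let XR := realization (R:=R) RA (@dsq A) in
  let XRp := realization (R:=R) RpA (@dsub A) in
  (* the vertex action of sigma: v |-> v sigma^-1, so (t.sigma)(v) = t(v sigma^-1) ... *)
  let act := fun s : {perm A} => dact (s^-1)%g in
  (* |F| *)
  let Fr : rpoint R (dorder A) -> rpoint R (dorder A) := realize (R:=R) (@Fmap A) in
  (* |R(A)| ~= |sd R(A)| --|G|--> |R^+(A)| *)
  let Gr : rpoint R (dorder A) -> rpoint R (dorder A) :=
    fun t => realize (R:=R) (@Gmap A) (sd_homeo RA (@dsq A) t) in
  [/\
    (* F : (R^+(A), \subseteq) -> (R(A), \sqsubseteq) is well defined and order preserving *)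
    (forall o : dorder A, semi_regular o -> regular (Fmap o)),
    (forall o1 o2 : dorder A, semi_regular o1 -> semi_regular o2 ->
        dsub o1 o2 -> dsq (Fmap o1) (Fmap o2)),
    (* G : sd(R(A), \sqsubseteq) -> (R^+(A), \subseteq) is well defined and order preserving *)
    (forall c : {set dorder A}, sdR c -> semi_regular (Gmap c)),
    (forall c1 c2 : {set dorder A}, sdR c1 -> sdR c2 -> c1 \subset c2 -> dsub (Gmap c1) (Gmap c2)) &
    (* |F| and |G| o (standard homeo) are mutually inverse equivariant homotopy equivalences *)
    [/\ (forall t, XRp t -> XR (Fr t)) /\ (forall t, XR t -> XRp (Gr t)),
        cont_on XRp Fr /\ cont_on XR Gr,
        (forall s t, XRp t -> Fr (pt_act (act s) t) = pt_act (act s) (Fr t)) /\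
        (forall s t, XR t -> Gr (pt_act (act s) t) = pt_act (act s) (Gr t)),
        equiv_homotopic act XRp (fun t => Gr (Fr t)) id
      & equiv_homotopic act XR (fun t => Fr (Gr t)) id]].
Proof.
cbv beta zeta.
split.
- by move=> o; apply: item1.
- by move=> o1 o2 [d1 _] [d2 _]; apply: item2.
- by move=> c cv; apply: item3.
- by move=> c1 c2 v1 v2 s12; apply: item4.
split.
- by split => t Xt; [apply: Fr_mem | apply: Gr_mem].
- split; apply: continuous_subspaceT; [exact: cts_Fr | exact: cts_Gr].
- by split => s t _; [apply: Fr_act | apply: Gr_act].
- exists (@H1 R A); split.
  + apply: continuous_subspaceT; exact: cts_H1.
  + by move=> s t s01 Xt; apply: H1_mem.
  + by move=> t /realizationP [[t0 _ _] _]; apply: H1_0.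
  + by move=> t Xt; apply: H1_1.
  + by move=> sg s t _ _; apply: H1_act.
- exists (@H2 R A); split.
  + apply: continuous_subspaceT; exact: cts_H2.
  + by move=> s t s01 Xt; apply: H2_mem.
  + by move=> t _; apply: H2_0.
  + by move=> t _; apply: H2_1.
  + by move=> sg s t _ _; apply: H2_act.
Qed.
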